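(* For every $\epsilon>0$ there exist infinitely many graphs $G$ such that $G$ is $\Gamma$-connected for some Abelian group $\Gamma$ of prime order but $G$ is not $\Gamma'$-connected for some Abelian group $\Gamma'$ with $|\Gamma'| \geq (2-\epsilon)|\Gamma|$. Consequently, for every $\epsilon>0$ there are infinitely many primes $k$ with $g(k) > (2-\epsilon)k$.
   Context: Graphs are finite, may have multiple edges but no loops. For an orientation $D$ of $G$ and a vertex $v$, $E^+(v)$ (resp. $E^-(v)$) is the set of edges directed out of (resp. into) $v$. For an Abelian group $\Gamma$, a graph $G$ is $\Gamma$-connected if for some (equivalently, any) orientation $D$ of $G$ and every $\beta: V(G)\to\Gamma$ with $\sum_{v}\beta(v)=0$ there is $f: E(G)\to\Gamma$ with $f(e)\neq 0$ for all $e$ and $\sum_{e\in E^+(v)} f(e)-\sum_{e\in E^-(v)} f(e)=\beta(v)$ for all $v$. For a natural number $k$, $g(k)$ is the least number such that whenever a graph $G$ is $\Gamma$-connected for some Abelian group $\Gamma$ of order $k$, $G$ is also $\Gamma'$-connected for every Abelian group $\Gamma'$ of order $|\Gamma'|\geq g(k)$. *)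

(* Defs.v *)
From HB Require Import structures.
From mathcomp Require Import all_boot all_order all_algebra.
From mathcomp Require Import reals.
Set Implicit Arguments. Unset Strict Implicit. Unset Printing Implicit Defensive.
Import Order.TTheory GRing.Theory Num.Theory.
Local Open Scope ring_scope.

(* A finite graph, possibly with multiple edges, without loops, given together
   with a fixed orientation: edge e is directed from [gtail e] to [ghead e]. *)
Record graph := Graph {
  gV : finType;
  gE : finType;
  gtail : gE -> gV;
  ghead : gE -> gV;
  gloopless : forall e, gtail e != ghead e }.

(* G is Gamma-connected (w.r.t. the orientation carried by G; the notion is
   independent of the orientation). *)
Definition group_connected (G : graph) (Gamma : finZmodType) : Prop :=
  forall beta : gV G -> Gamma, \sum_(v : gV G) beta v = 0 ->
  exists f : gE G -> Gamma, (forall e, f e != 0) /\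
    forall v : gV G,
      \sum_(e : gE G | gtail e == v) f e - \sum_(e : gE G | ghead e == v) f e
      = beta v.

(* [g_bound_ok k m]: every graph that is Gamma-connected for some abelian
   group Gamma of order k is Gamma'-connected for every abelian group Gamma'
   of order >= m.  g(k) is the least m with [g_bound_ok k m]. *)
Definition g_bound_ok (k m : nat) : Prop :=
  forall G : graph,
    (exists Gamma : finZmodType, #|Gamma| = k /\ group_connected G Gamma) ->
    forall Gamma' : finZmodType, (m <= #|Gamma'|)%N -> group_connected G Gamma'.

Definition g_greater_than {R : realType} (k : nat) (x : R) : Prop :=
  forall m : nat, (m%:R <= x) -> ~ g_bound_ok k m.

(* Main.v *)
Require Import Defs.
From HB Require Import structures.
From mathcomp Require Import all_boot all_order all_algebra.
From mathcomp Require Import reals.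
From mathcomp Require Import zify lra.
Import Order.TTheory GRing.Theory Num.Theory.
Local Open Scope ring_scope.
Lemma natr_Fp p (c : 'F_p) : (nat_of_ord c)%:R = c.
Proof. exact: natr_Zp. Qed.

Section Fp.
Variable p : nat.
Hypothesis pp : prime p.
Local Notation G := 'F_p.

Lemma closed_all (C : {set G}) (d x0 : G) : x0 \in C -> d != 0 ->
  (forall x, x \in C -> x + d \in C) -> forall y, y \in C.
Proof.
move=> Cx0 d0 H y.
have Hk : forall k : nat, x0 + d *+ k \in C.
  by elim=> [|k IH]; [rewrite mulr0n addr0 | rewrite mulrSr addrA; apply: H].
have -> : y = x0 + d *+ (nat_of_ord ((y - x0) / d)) by rewrite -mulr_natr natr_Fp mulrC divfK // addrC subrK.
exact: Hk.
Qed.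

Lemma grow (A B : {set G}) : A != set0 -> (1 < #|B|)%N ->
  (minn p (#|A|.+1) <= #|[set (x + y)%R | x in A, y in B]|)%N.
Proof.
move=> A0 /card_gt1P [a [b [aB bB ab]]].
set S := [set _ | _ in _, _ in _].
pose A1 := [set (x + a)%R | x in A].
have cA1 : #|A1| = #|A| by apply: card_imset; apply: addIr.
have sA1 : A1 \subset S by apply/subsetP=> z /imsetP [x xA ->]; apply/imset2P; exists x a.
case: (boolP ([set (x + b)%R | x in A] \subset A1)) => [sub|nsub].
  have allA1 : forall y, y \in A1.
    case/set0Pn: A0 => x0 x0A.
    apply: (@closed_all A1 (b - a) (x0 + a)); first by apply/imsetP; exists x0.
      by rewrite subr_eq0 eq_sym.
    move=> z /imsetP [x xA ->].
    have -> : x + a + (b - a) = x + b by rewrite -addrA (addrC a) subrK.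
    by apply: (subsetP sub); apply/imsetP; exists x.
  have -> : S = setT.
    apply/eqP; rewrite eqEsubset subsetT /=; apply/subsetP=> y _.
    exact: (subsetP sA1 _ (allA1 y)).
  by rewrite cardsT card_Fp // geq_minl.
case/subsetPn: nsub => z zb zA1.
have : (#|A1|.+1 <= #|S|)%N.
  have -> : #|A1|.+1 = #|z |: A1| by rewrite cardsU1 zA1.
  apply: subset_leq_card; rewrite subUset sA1 andbT sub1set.
  case/imsetP: zb => x xA ->; apply/imset2P; exists x b => //.
by rewrite cA1 => h; apply: leq_trans h; apply: geq_minr.
Qed.
End Fp.

Section Sums.
Variable p : nat.
Hypothesis pp : prime p.
Local Notation G := 'F_p.

Definition Sums t (F : 'I_t -> {set G}) : {set G} :=
  [set c | [exists x : {ffun 'I_t -> G}, [forall i, x i \notin F i] && (\sum_i x i == c)]].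
Arguments Sums {t}.

Lemma sums_grow t (F : 'I_t -> {set G}) : (forall i, 1 < #|~: F i|)%N ->
  (minn p t.+1 <= #|Sums F|)%N.
Proof.
elim: t F => [|t IH] F HF.
  have : (0 : G) \in Sums F.
    rewrite inE; apply/existsP; exists [ffun=> 0]; rewrite big_ord0 eqxx andbT.
    by apply/forallP => -[].
  move=> h; apply: leq_trans (geq_minr _ _) _; rewrite card_gt0; apply/set0Pn; by exists 0.
pose F' (j : 'I_t) := F (widen_ord (leqnSn t) j).
have IH' := IH F' (fun j => HF _).
have ne : Sums F' != set0.
  rewrite -card_gt0; apply: leq_trans IH'; rewrite leq_min prime_gt0 //.
have sub : [set (x + y)%R | x in Sums F', y in ~: F ord_max] \subset Sums F.
  apply/subsetP => z /imset2P [x y xS yF ->].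
  rewrite inE in xS; case/existsP: xS => w /andP [/forallP wF /eqP wsum].
  rewrite inE; apply/existsP.
  exists [ffun i => if unlift ord_max i is Some j then w j else y].
  have wid : forall j : 'I_t, widen_ord (leqnSn t) j = lift ord_max j by move=> j; apply: val_inj; rewrite /= /bump leqNgt ltn_ord.
  apply/andP; split.
    apply/forallP => i; rewrite ffunE; case: unliftP => [j ->|->].
      by rewrite -wid; exact: wF j.
    by rewrite inE in yF.
  rewrite big_ord_recr /= ffunE unlift_none -wsum; apply/eqP; congr (_ + _).
  by apply: eq_bigr => j _; rewrite ffunE wid liftK.
have := @grow p pp _ _ ne (HF ord_max).
move/leq_trans => /(_ _ (subset_leq_card sub)).
apply: leq_trans.
move: IH'; lia.
Qed.

Lemma sums_all t (F : 'I_t -> {set G}) : (p <= t)%N -> (forall i, #|F i| <= p - 2)%N ->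
  forall c, exists x : 'I_t -> G, (forall i, x i \notin F i) /\ \sum_i x i = c.
Proof.
move=> pt HF c.
have HF' : forall i, (1 < #|~: F i|)%N.
  move=> i; rewrite cardsCs setCK card_Fp //; have := HF i; have := prime_gt1 pp; lia.
have := @sums_grow _ F HF'.
have -> : minn p t.+1 = p by apply/minn_idPl; lia.
move=> h.
have : Sums F == setT by rewrite eqEcard subsetT cardsT card_Fp.
move/eqP => ST.
have : c \in Sums F by rewrite ST inE.
rewrite inE => /existsP [w /andP [/forallP wF /eqP ws]].
by exists w.
Qed.
End Sums.

Section Theta.
Variables t n : nat.
Definition thV := (bool + 'I_t * 'I_n)%type.
Definition thE := ('I_t * 'I_n.+1)%type.
Definition thtail (e : thE) : thV :=
  if unlift ord0 e.2 is Some k then inr (e.1, k) else inl false.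
Definition thhead (e : thE) : thV :=
  if unlift ord_max e.2 is Some k then inr (e.1, k) else inl true.

Lemma th_loopless e : thtail e != thhead e.
Proof.
case: e => i j; rewrite /thtail /thhead /=.
case: unliftP => [k ->|->]; case: unliftP => [k' |] //=.
move=> eq; apply/negP => /eqP [] ek; move: eq; rewrite ek.
move/(congr1 val) => /=; rewrite /bump /= leqNgt ltn_ord /=; lia.
Qed.

Definition theta := @Graph thV thE thtail thhead th_loopless.
End Theta.
Arguments thtail {t n}.
Arguments thhead {t n}.

Lemma lift_neqh m (h : 'I_m.+1) k : (lift h k == h) = false.
Proof. by apply/negbTE; rewrite eq_sym neq_lift. Qed.
Lemma lift_neqh' m (h : 'I_m.+1) k : (h == lift h k) = false.
Proof. by apply/negbTE; exact: neq_lift. Qed.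

Section ThetaSums.
Variables (t n : nat) (Gm : zmodType) (f : thE t n -> Gm).

Lemma sum_col (j0 : 'I_n.+1) : \sum_(e : thE t n | e.2 == j0) f e = \sum_i f (i, j0).
Proof.
transitivity (\sum_i \sum_(j | j == j0) f (i,j)); last by apply: eq_bigr => i _; rewrite big_pred1_eq.
by rewrite pair_big_dep; apply: eq_big => -[i j].
Qed.

Lemma out_inr i k : \sum_(e | thtail e == inr (i,k)) f e = f (i, lift ord0 k).
Proof.
rewrite (big_pred1 (i, lift ord0 k)) // => -[i' j]; rewrite /thtail /=.
case: unliftP => [k' ->|->] /=.
  by rewrite !xpair_eqE (inj_eq (@lift_inj _ ord0)).
by rewrite xpair_eqE lift_neqh' andbF.
Qed.

Lemma in_inr i k : \sum_(e | thhead e == inr (i,k)) f e = f (i, lift ord_max k).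
Proof.
rewrite (big_pred1 (i, lift ord_max k)) // => -[i' j]; rewrite /thhead /=.
case: unliftP => [k' ->|->] /=.
  by rewrite !xpair_eqE (inj_eq (@lift_inj _ ord_max)).
by rewrite xpair_eqE lift_neqh' andbF.
Qed.

Lemma out_false : \sum_(e | thtail e == inl false) f e = \sum_i f (i, ord0).
Proof.
rewrite -sum_col; apply: eq_bigl => -[i j]; rewrite /thtail /=.
case: unliftP => [k' ->|->] /=; last by rewrite eqxx.
by rewrite lift_neqh.
Qed.

Lemma out_true : \sum_(e | thtail e == inl true) f e = 0.
Proof.
by rewrite big_pred0 // => -[i j]; rewrite /thtail /=; case: unliftP.
Qed.

Lemma in_true : \sum_(e | thhead e == inl true) f e = \sum_i f (i, ord_max).
Proof.
rewrite -sum_col; apply: eq_bigl => -[i j]; rewrite /thhead /=.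
case: unliftP => [k' ->|->] /=; last by rewrite !eqxx.
by rewrite lift_neqh.
Qed.

Lemma in_false : \sum_(e | thhead e == inl false) f e = 0.
Proof.
by rewrite big_pred0 // => -[i j]; rewrite /thhead /=; case: unliftP.
Qed.

End ThetaSums.

Lemma theta_conn p t n : prime p -> (p <= t)%N -> (n.+1 <= p - 2)%N ->
  group_connected (theta t n) ('F_p : finZmodType).
Proof.
move=> pp pt np beta bsum.
pose P i (j : nat) := \sum_(k < n | (k < j)%N) beta (inr (i,k)).
pose Fb i := [set - P i (nat_of_ord j) | j : 'I_n.+1].
have cF : forall i, (#|Fb i| <= p - 2)%N.
  by move=> i; apply: leq_trans (leq_imset_card _ _) _; rewrite card_ord.
have [x [xF xs]] := @sums_all p pp t Fb pt cF (beta (inl false)).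
exists (fun e : thE t n => x e.1 + P e.1 e.2); split.
  move=> [i j] /=; apply/negP => /eqP h; move: (xF i); rewrite /Fb; apply/negP/negPn.
  apply/imsetP; exists j => //; apply/eqP; by rewrite -subr_eq0 opprK h.
case => [[|]|[i k]] /=.
- rewrite out_true in_true sub0r.
  have -> : \sum_i (x i + P i (@ord_max n)) = beta (inl false) + \sum_i \sum_(k < n) beta (inr (i,k)).
    rewrite big_split /= xs; congr (_ + _); apply: eq_bigr => i _.
    by rewrite /P; apply: eq_bigl => k; rewrite ltn_ord.
  move: bsum; rewrite big_sumType big_bool /=.
  have -> : \sum_(w : 'I_t * 'I_n) beta (inr w) = \sum_i \sum_(k < n) beta (inr (i,k)).
    by rewrite pair_big; apply: eq_bigr => -[].
  by rewrite -addrA => /eqP; rewrite addr_eq0 => /eqP ->.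
- rewrite out_false in_false subr0 -xs; apply: eq_bigr => i _.
  by rewrite /P big_pred0 ?addr0.
- rewrite out_inr in_inr /=.
  have -> : bump 0 k = k.+1 by rewrite /bump leq0n.
  have -> : bump n k = k by rewrite /bump leqNgt ltn_ord.
  rewrite /P (bigD1 k) /= ?ltnSn //.
  have -> : \sum_(k' < n | (k' < k.+1)%N && (k' != k)) beta (inr (i, k')) =
            \sum_(k' < n | (k' < k)%N) beta (inr (i, k')).
    by apply: eq_bigl => k'; rewrite ltnS ltn_neqAle andbC.
  by rewrite addrCA addrK.
Qed.

Definition P2 (a b : nat) := ('Z_a * 'Z_b)%type.
HB.instance Definition _ a b := GRing.Zmodule.on (P2 a b).
HB.instance Definition _ a b := Finite.on (P2 a b).

Lemma fst_sum a b (I : finType) (F : I -> P2 a b) : (\sum_i F i).1 = \sum_i (F i).1.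
Proof. exact: (big_morph (fun x : P2 a b => x.1) (fun x y => erefl) erefl). Qed.

Lemma theta_nconn t m : ~ group_connected (theta t m.+1) (P2 2 m.+2 : finZmodType).
Proof.
move=> H.
pose one2 : P2 2 m.+2 := (0, 1).
pose bf : P2 2 m.+2 := ((t.+1)%:R, 0).
pose beta (v : thV t m.+1) : P2 2 m.+2 := match v with
  | inl false => bf | inl true => - (bf + \sum_(w : 'I_t * 'I_m.+1) one2) | inr _ => one2 end.
have bsum : \sum_v beta v = 0.
  by rewrite big_sumType big_bool /= -addrA addNr.
have [f [fnz fc]] := H beta bsum.
have key : forall i, (f (i, ord0)).1 = 1.
  move=> i.
  have step : forall j, (j < m.+2)%N ->
      (f (i, inord j)).1 = (f (i, ord0)).1 /\ (f (i, inord j)).2 = (f (i, ord0)).2 + j%:R.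
    elim => [|j IH] hj.
      have -> : inord 0 = ord0 :> 'I_m.+2 by apply: val_inj; rewrite /= inordK.
      by rewrite mulr0n addr0.
    have hj' : (j < m.+1)%N by [].
    have := fc (inr (i, inord j)); rewrite /= out_inr in_inr.
    have -> : lift ord0 (inord j : 'I_m.+1) = inord j.+1.
      by apply: val_inj; rewrite /= /bump leq0n inordK // inordK.
    have -> : lift ord_max (inord j : 'I_m.+1) = inord j.
      by apply: val_inj; rewrite /= /bump inordK // leqNgt hj' /= inordK // ltnW.
    move/eqP; rewrite subr_eq => /eqP ->.
    have [h1 h2] := IH (ltnW hj).
    by rewrite /= h1 h2 add0r addrC -addrA -mulrSr.
  apply/eqP; apply/negPn/negP => h0.
  have h0' : (f (i, ord0)).1 = 0.
    move: h0; case: (f (i, ord0)).1 => -[|[|k]] hk; [move=> _; exact: val_inj | move/negP; case; apply/eqP; exact: val_inj | by []].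
  pose y := (f (i, ord0)).2.
  have [h1 h2] := step (nat_of_ord (- y)) (ltn_ord _).
  have := fnz (i, inord (- y)).
  by rewrite [f _]surjective_pairing h1 h2 h0' natr_Zp subrr eqxx.
have := fc (inl false); rewrite /= out_false in_false subr0 => /(congr1 fst).
rewrite fst_sum /=.
under eq_bigr => i _ do rewrite key.
rewrite sumr_const card_ord mulrSr => /eqP.
by rewrite -subr_eq0 opprD addrA subrr sub0r oppr_eq0.
Qed.

Lemma card_P2 m : #|(P2 2 m.+2 : finType)| = (2 * m.+2)%N.
Proof. by rewrite card_prod !card_ord. Qed.

Lemma bound_ineq (R : realType) (eps : R) (p : nat) : 0 < eps -> (4 < p)%N ->
  4 / eps < p%:R -> (2 - eps) * p%:R <= (2 * (p - 4).+2)%N%:R.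
Proof.
move=> e0 p4 h.
rewrite ltr_pdivrMr // in h.
have -> : (2 * (p - 4).+2)%N = (2 * p - 4)%N by lia.
rewrite natrB; last by lia.
rewrite natrM; nra.
Qed.

Theorem corollary3p3 (R : realType) (eps : R) : 0 < eps ->
  (forall N : nat, exists G : graph, (N < #|gV G| + #|gE G|)%N /\
     exists Gamma : finZmodType, prime #|Gamma| /\ group_connected G Gamma /\
     exists Gamma' : finZmodType,
       (2 - eps) * (#|Gamma|)%:R <= (#|Gamma'|)%:R /\ ~ group_connected G Gamma')
  /\
  (forall N : nat, exists k : nat, (N < k)%N /\ prime k /\
     g_greater_than k ((2 - eps) * k%:R)).
Proof.
move=> e0.
have main : forall N : nat, exists p : nat, [/\ (N < p)%N, prime p, (4 < p)%N & 4 / eps < p%:R].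
  move=> N.
  have b0 : 0 <= 4 / eps by apply: divr_ge0 => //; apply: ltW.
  have [p Mp pp] := prime_above (maxn N (maxn 4 (Num.Def.archi_bound (4 / eps)))).
  exists p; split => //; try lia.
  apply: lt_le_trans (archi_boundP b0) _; rewrite ler_nat; lia.
have conn : forall p, prime p -> (4 < p)%N -> group_connected (theta p (p - 4).+1) ('F_p : finZmodType).
  by move=> p pp p4; apply: theta_conn => //; lia.
split.
  move=> N; have [p [Np pp p4 hp]] := main N.
  exists (theta p (p - 4).+1); split.
    rewrite /= card_prod !card_ord; nia.
  exists ('F_p : finZmodType); rewrite card_Fp //; split => //; split; first exact: conn.
  exists (P2 2 (p - 4).+2 : finZmodType); split; last exact: theta_nconn.
  by rewrite card_P2; apply: bound_ineq.
move=> N; have [p [Np pp p4 hp]] := main N.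
exists p; split => //; split => // m' hm' ok.
apply: (@theta_nconn p (p - 4)).
apply: (ok _ _ (P2 2 (p - 4).+2 : finZmodType)).
  by exists ('F_p : finZmodType); rewrite card_Fp //; split => //; exact: conn.
rewrite card_P2 -(ler_nat R); apply: le_trans hm' _; exact: bound_ineq.
Qed.
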